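(* Let $n>1$ be an integer and let $\langle\mathscr{V},\tau,\sim,\Lambda,\mathrm{V},\Rightarrow\rangle$ be a many valued logic with exactly $n$ values (i.e. $|\mathscr{V}|=n$) whose disjunction operation $\mathrm{V}$ is commutative and associative. Suppose that the formula $(\mathfrak{p}\rightarrow\mathfrak{p})\vee\mathfrak{q}$ (for distinct atoms $\mathfrak{p},\mathfrak{q}$) is a tautology of this logic. Then for distinct atoms $\mathfrak{p}_0,\mathfrak{p}_1,\dots,\mathfrak{p}_n$, the formula $$\bigvee_{0\leqslant i<j\leqslant n}(\mathfrak{p}_i\rightarrow\mathfrak{p}_j)$$ (the disjunction of all the $\binom{n+1}{2}$ implications $\mathfrak{p}_i\rightarrow\mathfrak{p}_j$ with $i<j$, in any order and bracketing) is a tautology of this logic.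
   Context: Formulas are built from propositional atoms using $\neg,\wedge,\vee,\rightarrow$ (and the constant $\top$). A many valued logic is a tuple $\langle\mathscr{V},\tau,\sim,\Lambda,\mathrm{V},\Rightarrow\rangle$ where $\mathscr{V}$ is a set of values, $\tau\in\mathscr{V}$ is a designated element (truth), $\sim\colon\mathscr{V}\to\mathscr{V}$ and $\Lambda,\mathrm{V},\Rightarrow\colon\mathscr{V}^2\to\mathscr{V}$. A valuation is any map $\nu$ from atoms to $\mathscr{V}$, extended to formulas by $\nu(\neg\varphi)=\sim\nu(\varphi)$, $\nu(\varphi\wedge\psi)=\nu(\varphi)\,\Lambda\,\nu(\psi)$, $\nu(\varphi\vee\psi)=\nu(\varphi)\,\mathrm{V}\,\nu(\psi)$, $\nu(\varphi\rightarrow\psi)=\nu(\varphi)\Rightarrow\nu(\psi)$. A formula $\theta$ is a tautology if $\nu(\theta)=\tau$ for every valuation $\nu$. An $n$-valued logic is one with $|\mathscr{V}|=n$. *)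

(* Defs.v *)
From mathcomp Require Import all_boot all_order.
Set Implicit Arguments. Unset Strict Implicit. Unset Printing Implicit Defensive.

Inductive formula : Type :=
| Atom of nat
| Top
| Neg of formula
| And of formula & formula
| Or of formula & formula
| Imp of formula & formula.

Section Semantics.
Variables (V : Type) (tau : V) (neg : V -> V) (conj disj imp : V -> V -> V).

Fixpoint eval (nu : nat -> V) (f : formula) : V :=
  match f with
  | Atom a => nu a
  | Top => tau
  | Neg g => neg (eval nu g)
  | And g h => conj (eval nu g) (eval nu h)
  | Or g h => disj (eval nu g) (eval nu h)
  | Imp g h => imp (eval nu g) (eval nu h)
  end.

Definition tautology (f : formula) : Prop := forall nu : nat -> V, eval nu f = tau.
End Semantics.

Fixpoint big_or (l : seq formula) : formula :=
  match l with
  | [::] => Top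
  | [:: f] => f
  | f :: r => Or f (big_or r)
  end.

Definition impl_list (n : nat) (a : 'I_n.+1 -> nat) : seq formula :=
  [seq Imp (Atom (a ij.1)) (Atom (a ij.2))
  | ij <- [seq ij : 'I_n.+1 * 'I_n.+1 <- [seq (i, j) | i <- enum 'I_n.+1, j <- enum 'I_n.+1]
           | (ij.1 < ij.2)%N]].

(* Main.v *)
Require Import Defs.
From mathcomp Require Import all_boot.

Lemma size2_of (T : eqType) (l : seq T) x z : x \in l -> z \in l -> x != z -> (1 < size l)%N.
Proof.
case: l => [|w [|w' r]] //=.
by rewrite !mem_seq1 => /eqP -> /eqP ->; rewrite eqxx.
Qed.

Lemma big_or_split (V : Type) (tau : V) (neg : V -> V) (conj disj imp : V -> V -> V)
  (hC : commutative disj) (hA : associative disj) nu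
  (X : eqType) (g : X -> formula) (l : seq X) x :
  x \in l -> (1 < size l)%N ->
  exists y, eval tau neg conj disj imp nu (big_or (map g l)) =
            disj (eval tau neg conj disj imp nu (g x)) y.
Proof.
elim: l => [|w r IH] //= xin sz.
case: r IH xin sz => [|w' r] IH xin sz //=.
rewrite in_cons in xin; case/orP: xin => [/eqP ->|xin].
  by eexists.
have sz' : (1 < size (w' :: r))%N \/ r = [::].
  by case: r {IH xin sz} => [|? ?]; [right|left].
case: sz' => [sz'|r0].
  have [y ->] := IH xin sz'.
  exists (disj (eval tau neg conj disj imp nu (g w)) y).
  by rewrite hA (hC _ (eval _ _ _ _ _ _ (g x))) -hA.
move: xin; rewrite r0 mem_seq1 => /eqP ->; rewrite /=.
by exists (eval tau neg conj disj imp nu (g w)); rewrite hC.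
Qed.

Theorem lemma1 (n : nat) (hn : 1 < n)
  (V : finType) (hV : #|V| = n)
  (tau : V) (neg : V -> V) (conj disj imp : V -> V -> V)
  (hC : commutative disj) (hA : associative disj)
  (p q : nat) (hpq : p != q)
  (H : tautology tau neg conj disj imp (Or (Imp (Atom p) (Atom p)) (Atom q)))
  (a : 'I_n.+1 -> nat) (ha : injective a) :
  tautology tau neg conj disj imp (big_or (impl_list a)).
Proof.
have Hxy : forall x y, disj (imp x x) y = tau.
  move=> x y; have := H (fun k => if k == p then x else y).
  by rewrite /= eqxx eq_sym (negbTE hpq).
move=> nu.
set f := fun i : 'I_n.+1 => nu (a i).
have ninj : ~~ injectiveb f.
  apply/negP => /injectiveP /leq_card; rewrite card_ord hV.
  by rewrite ltnn.
have [i [j ij fij]] : exists i, exists2 j, i != j & f i = f j by apply/injectivePn.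
have [i' [j' [lt fe]]] : exists i' j' : 'I_n.+1, (i' < j')%N /\ f i' = f j'.
  case: (ltngtP i j) => h.
  - by exists i, j.
  - by exists j, i.
  - by move: ij; rewrite (val_inj h) eqxx.
set L := [seq ij : 'I_n.+1 * 'I_n.+1 <- [seq (i, j) | i <- enum 'I_n.+1, j <- enum 'I_n.+1]
           | (ij.1 < ij.2)%N].
have memL : forall u v : 'I_n.+1, (u < v)%N -> (u, v) \in L.
  move=> u v uv; rewrite mem_filter /= uv /=.
  by apply: (allpairs_f (fun a b => (a, b))); rewrite mem_enum.
have h1 : (1 < n.+1)%N by apply: ltn_trans hn _.
have h2 : (2 < n.+1)%N by [].
have szL : (1 < size L)%N.
  apply: (@size2_of _ L (ord0, Ordinal h1) (ord0, Ordinal h2)); try exact: memL.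
  by apply/negP => /eqP [].
have [y Hy] := @big_or_split _ tau neg conj disj imp hC hA nu _
  (fun ij : 'I_n.+1 * 'I_n.+1 => Imp (Atom (a ij.1)) (Atom (a ij.2))) L (i', j') (memL _ _ lt) szL.
rewrite /impl_list -/L Hy /=.
by move: fe; rewrite /f => ->; apply: Hxy.
Qed.
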